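(* For all positive integers $n,m,k$ with $m\ge k$, every $(n,N,k,m)$-PIR array code over $\mathbb{F}_q$ satisfies $N\ge \frac{mn}{m-k+1}$; i.e. $N_P(n,k,m)\ge \frac{mn}{m-k+1}$. Consequently also $N_B(n,k,m)\ge\frac{mn}{m-k+1}$.
   Context: Fix a finite field $\mathbb{F}_q$; $[n]=\{1,\dots,n\}$. An $(n,N,k,m)$-batch array code (BAC) over $\mathbb{F}_q$ is an $\mathbb{F}_q$-linear map $\mathcal{C}:\mathbf x=(x_1,\dots,x_n)\in\mathbb{F}_q^n\mapsto(\mathbf c_1,\dots,\mathbf c_m)$ with buckets $\mathbf c_\ell\in\mathbb{F}_q^{N_\ell}$, $N_\ell\ge1$ independent of $\mathbf x$, $\sum_\ell N_\ell=N$, such that for every multiset $\{\{i_1,\dots,i_k\}\}$ of elements of $[n]$ there is a partition of $[m]$ into $k$ sets $R_1,\dots,R_k$ such that for each $j\in[k]$, $x_{i_j}$ is an $\mathbb{F}_q$-linear combination of values $f_\ell(\mathbf c_\ell)$, $\ell\in R_j$, for some linear functionals $f_\ell:\mathbb{F}_q^{N_\ell}\to\mathbb{F}_q$ (functionals and coefficients independent of $\mathbf x$); $R_j$ is then called a recovery set of $x_{i_j}$. An $(n,N,k,m)$-PIR array code is defined identically except that the requirement is imposed only for multisets of the form $\{\{i,i,\dots,i\}\}$, i.e. every $x_i$ has $k$ pairwise disjoint recovery sets partitioning $[m]$. For $k\le m$, $N_P(n,k,m)$ (resp. $N_B(n,k,m)$) is the minimum $N$ for which an $(n,N,k,m)$-PIR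 array code (resp. BAC) over $\mathbb{F}_q$ exists; clearly $N_B\ge N_P$. *)

(* Defs.v *)
From mathcomp Require Import all_boot all_order all_algebra all_field.
Set Implicit Arguments. Unset Strict Implicit. Unset Printing Implicit Defensive.
Import GRing.Theory Num.Theory.
Local Open Scope ring_scope.

(* An array code over a finite field F with m buckets: the encoder of bucket l
   is the F-linear map x |-> x *m G l : F^n -> F^(Ns l), x a row vector. *)

(* R is a recovery set of x_i: there are linear functionals f_l : F^(Ns l) -> F
   (represented by column vectors, f_l(c) = (c *m f l) 0 0) and coefficients a_l,
   independent of x, such that x_i = sum_{l in R} a_l f_l(c_l) for all x. *)
Definition recovery_set (F : finFieldType) (n m : nat) (Ns : 'I_m -> nat)
  (G : forall l : 'I_m, 'M[F]_(n, Ns l)) (i : 'I_n) (R : {set 'I_m}) : Prop :=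
  exists (f : forall l : 'I_m, 'cV[F]_(Ns l)) (a : 'I_m -> F),
    forall x : 'rV[F]_n,
      x 0 i = \sum_(l in R) a l * ((x *m G l) *m f l) 0 0.

Definition valid_sizes (m : nat) (Ns : 'I_m -> nat) : Prop :=
  forall l, (0 < Ns l)%N.

Definition total_size (m : nat) (Ns : 'I_m -> nat) : nat := (\sum_(l < m) Ns l)%N.

(* PIR array code with k recovery sets: for each i, a partition of [m] into k
   sets R_1..R_k (given by the block-assignment map p : [m] -> [k],
   R_j = p^-1(j)), each R_j a recovery set of x_i. *)
Definition is_PIR_array_code (F : finFieldType) (n k m : nat) (Ns : 'I_m -> nat)
  (G : forall l : 'I_m, 'M[F]_(n, Ns l)) : Prop :=
  valid_sizes Ns /\
  forall i : 'I_n, exists p : 'I_m -> 'I_k,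
    forall j : 'I_k, recovery_set G i [set l | p l == j].

(* Batch array code: for every multiset {{i_1,..,i_k}} of [n] (given as a
   k-tuple idx), a partition R_1..R_k of [m] with R_j recovering x_{i_j}. *)
Definition is_batch_array_code (F : finFieldType) (n k m : nat) (Ns : 'I_m -> nat)
  (G : forall l : 'I_m, 'M[F]_(n, Ns l)) : Prop :=
  valid_sizes Ns /\
  forall idx : 'I_k -> 'I_n, exists p : 'I_m -> 'I_k,
    forall j : 'I_k, recovery_set G (idx j) [set l | p l == j].

(* Main.v *)
Require Import Defs.
From mathcomp Require Import all_boot all_order all_algebra all_field.
From mathcomp Require Import zify.
Import GRing.Theory Num.Theory.
Local Open Scope ring_scope.

Lemma window_bound {F : finFieldType} {n m' k w : nat} (Hw : (w <= m'.+1)%N)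
  (Hwk : (w + k.-1 = m'.+1)%N) (Hk : (0 < k)%N)
  {Ns : 'I_m'.+1 -> nat} {G : forall l : 'I_m'.+1, 'M[F]_(n, Ns l)} :
  is_PIR_array_code k G -> forall t : 'I_m'.+1,
  (n <= \sum_(d < w) Ns (t + widen_ord Hw d)%R)%N.
Proof.
move=> [_ HP] t.
pose W := [set (t + widen_ord Hw d)%R | d : 'I_w].
have cW : #|W| = w.
  rewrite card_imset ?card_ord //.
  by move=> a b /addrI /(congr1 val) /= /val_inj.
have HR : forall i : 'I_n, exists R : {set 'I_m'.+1},
    R \subset W /\ recovery_set G i R.
  move=> i; have [p Hp] := HP i.
  have [j Hj] : exists j : 'I_k, j \notin p @: ~: W.
    case: (pickP [pred j | j \notin p @: ~: W]) => [j Hj|Hnone]; first by exists j.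
    have: [set: 'I_k] \subset p @: ~: W.
      by apply/subsetP => j _; move: (Hnone j) => /= /negbFE.
    move/subset_leq_card; rewrite cardsT card_ord.
    have := leq_imset_card p (~: W).
    have -> : #|~: W| = k.-1.
      by apply/eqP; rewrite -(eqn_add2l w) Hwk -{1}cW cardsC card_ord.
    move=> h1 h2; have := leq_trans h2 h1.
    by rewrite -ltnS prednK // ltnn.
  exists [set l | p l == j]; split; last exact: Hp.
  apply/subsetP => l; rewrite inE => /eqP Hl.
  apply: contraR Hj => HlW; rewrite -Hl; apply: imset_f; by rewrite inE.
pose T := {d : 'I_w & 'I_(Ns (t + widen_ord Hw d)%R)}.
pose phi (x : 'rV[F]_n) : {ffun T -> F} :=
  [ffun u : T => (x *m G (t + widen_ord Hw (tag u))%R) 0 (tagged u)].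
have phi_inj : injective phi.
  move=> x y Hxy.
  have HG : forall l, l \in W -> x *m G l = y *m G l.
    move=> l /imsetP [d _ ->]; apply/rowP => c.
    have := congr1 (fun f : {ffun T -> F} => f (existT _ d c : T)) Hxy.
    by rewrite /phi !ffunE.
  apply/rowP => i; have [R [sRW [f [a Ha]]]] := HR i.
  rewrite Ha [RHS]Ha; apply: eq_bigr => l Hl.
  by rewrite HG // (subsetP sRW).
have := leq_card phi phi_inj.
rewrite card_mx card_ffun mul1n leq_exp2l ?card_finNzRing_gt1 //.
rewrite card_tagged sumnE big_map big_enum /=.
by under eq_bigr do rewrite card_ord.
Qed.

Lemma pir_bound (F : finFieldType) (n m k : nat) :
  (0 < m)%N -> (0 < k)%N -> (k <= m)%N ->
  forall (Ns : 'I_m -> nat) (G : forall l : 'I_m, 'M[F]_(n, Ns l)),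
     is_PIR_array_code k G ->
     ((m * n)%:R / (m - k + 1)%:R : rat) <= (total_size Ns)%:R.
Proof.
case: m => [//|m'] _ Hk Hkm Ns G HP.
set w := (m'.+1 - k + 1)%N.
have Hw : (w <= m'.+1)%N by rewrite /w; lia.
have Hwk : (w + k.-1 = m'.+1)%N by rewrite /w; lia.
have Hsum : (m'.+1 * n <= total_size Ns * w)%N.
  have -> : (m'.+1 * n = \sum_(t < m'.+1) n)%N by rewrite sum_nat_const card_ord.
  apply: (@leq_trans (\sum_(t < m'.+1) \sum_(d < w) Ns (t + widen_ord Hw d)%R)).
    by apply: leq_sum => t _; exact: (window_bound Hw Hwk Hk HP t).
  rewrite exchange_big /=.
  have -> : (total_size Ns * w = \sum_(d < w) total_size Ns)%N.
    by rewrite sum_nat_const card_ord mulnC.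
  apply: leq_sum => d _; rewrite /total_size.
  by rewrite [X in (_ <= X)%N](reindex_inj (addIr (widen_ord Hw d))).
have w0 : (0 < w)%N by rewrite /w addn1.
rewrite ler_pdivrMr ?ltr0n // -natrM ler_nat.
exact: Hsum.

Qed.

Theorem theorem3p1 (F : finFieldType) (n m k : nat) :
  (0 < n)%N -> (0 < m)%N -> (0 < k)%N -> (k <= m)%N ->
  (forall (Ns : 'I_m -> nat) (G : forall l : 'I_m, 'M[F]_(n, Ns l)),
     is_PIR_array_code k G ->
     ((m * n)%:R / (m - k + 1)%:R : rat) <= (total_size Ns)%:R) /\
  (forall (Ns : 'I_m -> nat) (G : forall l : 'I_m, 'M[F]_(n, Ns l)),
     is_batch_array_code k G ->
     ((m * n)%:R / (m - k + 1)%:R : rat) <= (total_size Ns)%:R).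
Proof.
move=> _ Hm Hk Hkm; split; first exact: pir_bound.
move=> Ns G [Hv HB]; apply: (@pir_bound F n m k Hm Hk Hkm Ns G).
split; first exact: Hv.
by move=> i; have [p Hp] := HB (fun _ => i); exists p.
Qed.
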